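(* Let $\Delta$ be a finite domain, $\mathcal{L}$ a first-order language, $\Omega$ the set of all possible worlds on $\Delta$ w.r.t. $\mathcal{L}$, $R$ a binary predicate of $\mathcal{L}$, $k\ge 1$ an integer, and $\Gamma$ a first-order sentence over $\mathcal{L}$. Let $f_1^R,\dots,f_k^R$ be new binary predicates not in $\mathcal{L}$, with weights $w(f_i^R)=\overline{w}(f_i^R)=1$, and let $\Omega_{\mathrm{ext}}$ be the set of all possible worlds on $\Delta$ w.r.t. $\mathcal{L}$ extended by $f_1^R,\dots,f_k^R$. Define $$\Phi=(|R|=k|\Delta|)\wedge\Big(\forall x,y: R(x,y)\Leftrightarrow\bigvee_{i=1}^k f_i^R(x,y)\Big)\wedge\bigwedge_{i=1}^k\big(\forall x\,\exists y: f_i^R(x,y)\big)\wedge\bigwedge_{i\ne j}\big(\forall x,y:\neg f_i^R(x,y)\vee\neg f_j^R(x,y)\big).$$ Then for all weight functions $w,\overline{w}$ on the predicates of $\mathcal{L}$, $$\mathrm{WFOMC}\big(\Gamma\wedge\forall x\,\exists_{=k}y:R(x,y),\,w,\overline{w},\Omega\big)=\frac{1}{(k!)^{|\Delta|}}\,\mathrm{WFOMC}(\Gamma\wedge\Phi,\,w,\overline{w},\Omega_{\mathrm{ext}}).$$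
   Context: A possible world on $\Delta$ is a set of ground atoms over the language's predicates and $\Delta$. $N(R,\omega)$ is the number of ground atoms of $R$ true in $\omega$. For a set $\Omega$ of possible worlds, $\mathrm{WFOMC}(\Gamma,w,\overline{w},\Omega)=\sum_{\omega\in\Omega,\,\omega\models\Gamma}\prod_{R} w(R)^{N(R,\omega)}\overline{w}(R)^{|\Delta|^{\mathrm{arity}(R)}-N(R,\omega)}$, the product ranging over the predicates of the language of $\Omega$. The cardinality constraint $|R|=c$ holds in $\omega$ iff $N(R,\omega)=c$. $\forall x\,\exists_{=k}y:R(x,y)$ holds iff every $x\in\Delta$ has exactly $k$ distinct $y\in\Delta$ with $R(x,y)$. *)

(* Defs.v *)
From HB Require Import structures.
From mathcomp Require Import all_boot all_order all_algebra.
Set Implicit Arguments. Unset Strict Implicit. Unset Printing Implicit Defensive.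
Import Order.TTheory GRing.Theory Num.Theory.

(* A relational (function-free) first-order language is given by a finite
   type P of predicate symbols and an arity function ar : P -> nat.
   Formulas use de Bruijn indices: a quantifier binds index 0. *)
Inductive formula (P : Type) : Type :=
| FAtom of P & seq nat
| FEq of nat & nat
| FNot of formula P
| FAnd of formula P & formula P
| FOr of formula P & formula P
| FAll of formula P
| FEx of formula P.

Arguments FEq {P}.

Fixpoint map_formula (P Q : Type) (g : P -> Q) (f : formula P) : formula Q :=
  match f with
  | FAtom p a => FAtom (g p) a
  | FEq i j => FEq i j
  | FNot f1 => FNot (map_formula g f1)
  | FAnd f1 f2 => FAnd (map_formula g f1) (map_formula g f2)
  | FOr f1 f2 => FOr (map_formula g f1) (map_formula g f2)
  | FAll f1 => FAll (map_formula g f1)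
  | FEx f1 => FEx (map_formula g f1)
  end.

Fixpoint closed_at (P : Type) (n : nat) (f : formula P) : bool :=
  match f with
  | FAtom _ a => all (fun i => i < n) a
  | FEq i j => (i < n) && (j < n)
  | FNot f1 => closed_at n f1
  | FAnd f1 f2 => closed_at n f1 && closed_at n f2
  | FOr f1 f2 => closed_at n f1 && closed_at n f2
  | FAll f1 => closed_at n.+1 f1
  | FEx f1 => closed_at n.+1 f1
  end.

Definition sentence (P : Type) (f : formula P) : bool := closed_at 0 f.

Section Worlds.
Variables (P : finType) (ar : P -> nat) (D : finType).

Definition atom := {p : P & (ar p).-tuple D}.
Definition world := {set atom}.

Definition holds (w : world) (p : P) (s : seq D) : bool :=
  [exists t : (ar p).-tuple D, (val t == s) && (Tagged (fun q => (ar q).-tuple D) t \in w)].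

Definition natoms (w : world) (p : P) : nat :=
  #|[set t : (ar p).-tuple D | Tagged (fun q => (ar q).-tuple D) t \in w]|.

Fixpoint eval (f : formula P) (w : world) (env : seq D) : bool :=
  match f with
  | FAtom p a => [exists t : (ar p).-tuple D,
                   ([seq onth env i | i <- a] == [seq Some x | x <- val t])
                   && (Tagged (fun q => (ar q).-tuple D) t \in w)]
  | FEq i j => (onth env i != None) && (onth env i == onth env j)
  | FNot f1 => ~~ eval f1 w env
  | FAnd f1 f2 => eval f1 w env && eval f2 w env
  | FOr f1 f2 => eval f1 w env || eval f2 w env
  | FAll f1 => [forall x : D, eval f1 w (x :: env)]
  | FEx f1 => [exists x : D, eval f1 w (x :: env)]
  end.

Definition models (w : world) (f : formula P) : bool := eval f w [::].

Variable R : numFieldType.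

Definition world_weight (wt wbar : P -> R) (w : world) : R :=
  \prod_(p : P) (wt p ^+ natoms w p * wbar p ^+ (#|D| ^ ar p - natoms w p)).

Definition WFOMC (phi : world -> bool) (wt wbar : P -> R) : R :=
  \sum_(w : world | phi w) world_weight wt wbar w.

End Worlds.

Definition ext_ar (P : Type) (ar : P -> nat) (k : nat) (q : (P + 'I_k)%type) : nat :=
  match q with inl p => ar p | inr _ => 2 end.

Definition ext_weight (P : Type) (R : numFieldType) (k : nat) (wt : P -> R)
  (q : (P + 'I_k)%type) : R :=
  match q with inl p => wt p | inr _ => 1 end.

Definition exactly_k (P : finType) (ar : P -> nat) (D : finType) (k : nat)
  (r : P) (w : world ar D) : bool :=
  [forall x : D, #|[set y : D | holds w r [:: x; y]]| == k].

Definition Phi (P : finType) (ar : P -> nat) (D : finType) (k : nat) (r : P)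
  (w : world (ext_ar ar (k:=k)) D) : bool :=
  [&& natoms w (inl r) == k * #|D|,
      [forall x : D, forall y : D,
         holds w (inl r) [:: x; y] == [exists i : 'I_k, holds w (inr i) [:: x; y]]],
      [forall i : 'I_k, forall x : D, exists y : D, holds w (inr i) [:: x; y]] &
      [forall i : 'I_k, forall j : 'I_k, (i != j) ==>
         [forall x : D, forall y : D,
            ~~ holds w (inr i) [:: x; y] || ~~ holds w (inr j) [:: x; y]]]].

(* Main.v *)
Require Import Defs.
From HB Require Import structures.
From mathcomp Require Import all_boot all_order all_algebra.
Set Implicit Arguments. Unset Strict Implicit. Unset Printing Implicit Defensive.
Import Order.TTheory GRing.Theory Num.Theory.

Section S.
Variables (D P : finType) (ar : P -> nat) (k : nat).
Notation ear := (ext_ar ar (k:=k)).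
Notation W := (world ear D).
Notation w0 := (world ar D).

Definition restr (V : W) : w0 :=
  [set a : atom ar D | @existT _ (fun q => (ear q).-tuple D) (inl (tag a)) (tagged a) \in V].

Lemma eval_restr (f : formula P) (V : W) env :
  eval (map_formula inl f) V env = eval f (restr V) env.
Proof.
elim: f env => [p a|i j|f IH|f IH g IH2|f IH g IH2|f IH|f IH] env //=.
- by apply: eq_existsb => t; rewrite inE.
- by rewrite IH.
- by rewrite IH IH2.
- by rewrite IH IH2.
- by apply: eq_forallb => x; rewrite IH.
- by apply: eq_existsb => x; rewrite IH.
Qed.

Lemma holds_restr (V : W) p s : holds V (inl p) s = holds (restr V) p s.
Proof. by apply: eq_existsb => t; rewrite inE. Qed.

Lemma natoms_restr (V : W) p : natoms V (inl p) = natoms (restr V) p.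
Proof. by apply: eq_card => t; rewrite !inE. Qed.

Notation G := {ffun D -> {ffun 'I_k -> D}}.

Definition ext_mem (w : w0) (g : G) (a : atom ear D) : bool :=
  match a with
  | existT (inl p) t => @existT _ (fun q => (ar q).-tuple D) p t \in w
  | existT (inr i) t => let t' : 2.-tuple D := t in
       nth (thead t') t' 1 == g (thead t') i
  end.

Definition ext (w : w0) (g : G) : W := [set a | ext_mem w g a].

Lemma holds_ext_inr w g i x y : holds (ext w g) (inr i) [:: x; y] = (y == g x i).
Proof.
apply/existsP/idP => [[t /andP[/eqP ht]]|/eqP ->].
  rewrite inE /=.
  have -> : thead t = x by rewrite /thead (tnth_nth x) /= ht.
  by rewrite ht.
exists [tuple x; g x i]; rewrite eqxx inE /=. by [].
Qed.

Lemma restr_ext w g : restr (ext w g) = w.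
Proof. by apply/setP => -[p t]; rewrite !inE. Qed.


Lemma tuple2 (T : Type) (t : 2.-tuple T) : val t = [:: thead t; nth (thead t) t 1].
Proof. by case: t => -[|a [|b [|c s]]]. Qed.

Variable r : P.
Hypothesis ar_r : ar r = 2.

Definition Sx (w : w0) x := [set y | holds w r [:: x; y]].

Definition f2 (t : (ar r).-tuple D) : D * D :=
  let u := tcast ar_r t in (thead u, nth (thead u) u 1).

Lemma f2_val t : val t = [:: (f2 t).1; (f2 t).2].
Proof. by rewrite /f2 /= -tuple2; case: _ / ar_r. Qed.

Lemma holds_f2 w x y :
  holds w r [:: x; y] = [exists t, (f2 t == (x, y)) && (existT (fun q => (ar q).-tuple D) r t \in w)].
Proof.
apply: eq_existsb => t; congr (_ && _); rewrite f2_val.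
by case: (f2 t) => a b /=; apply/eqP/eqP => -[-> ->].
Qed.

Lemma natoms_sum w : natoms w r = \sum_x #|Sx w x|.
Proof.
rewrite /natoms.
set A := [set t | _].
have inj : injective f2.
  by move=> t1 t2 e; apply: val_inj; rewrite !f2_val e.
rewrite -(card_imset _ inj).
have -> : f2 @: A = [set p | holds w r [:: p.1; p.2]].
  apply/setP => -[x y]; rewrite inE holds_f2 /=.
  apply/imsetP/existsP => [[t tA ->]|[t /andP[/eqP e tA]]].
    by exists t; rewrite eqxx; rewrite inE in tA.
  by exists t; rewrite ?inE // e.
rewrite -sum1_card.
rewrite big_mkcond /=.
under [RHS]eq_bigr => x _ do rewrite -sum1_card big_mkcond /=.
rewrite pair_big /=; apply: eq_bigr => -[x y] _; rewrite !inE.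
by [].
Qed.


Lemma codom_fill (h : {ffun 'I_k -> D}) (S : {set D}) :
  injective h -> (forall i, h i \in S) -> #|S| = k -> forall y, y \in S -> exists j, y = h j.
Proof.
move=> inj hS cS y yS.
have sub : codom h \subset S by apply/subsetP => _ /codomP [i ->].
have cc : #|codom h| = #|S| by rewrite card_codom // card_ord cS.
have /(_ y) := subset_cardP cc sub.
by rewrite yS => /codomP [j ->]; exists j.
Qed.

Lemma mem_holds (V : W) i (t : 2.-tuple D) :
  (@existT _ (fun q => (ear q).-tuple D) (inr i) t \in V) = holds V (inr i) [:: thead t; nth (thead t) t 1].
Proof.
apply/idP/existsP => [tV|[t' /andP[/eqP e tV]]].
  by exists t; rewrite -tuple2 eqxx.
by have <- : t' = t by apply: val_inj; rewrite e -tuple2.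
Qed.

Section PhiV.
Variable V : W.
Hypothesis HV : Phi r V.

Lemma Phi_n : natoms V (inl r) = k * #|D|.
Proof. by case/and4P: HV => /eqP. Qed.

Lemma Phi_eq x y : holds V (inl r) [:: x; y] = [exists i, holds V (inr i) [:: x; y]].
Proof. by case/and4P: HV => _ /forallP /(_ x) /forallP /(_ y) /eqP. Qed.

Lemma Phi_tot i x : exists y, holds V (inr i) [:: x; y].
Proof. by case/and4P: HV => _ _ /forallP /(_ i) /forallP /(_ x) /existsP. Qed.

Lemma Phi_dis i j x y : i != j -> holds V (inr i) [:: x; y] -> holds V (inr j) [:: x; y] -> False.
Proof.
case/and4P: HV => _ _ _ /forallP /(_ i) /forallP /(_ j) /implyP H ij hi hj.
by move: (H ij) => /forallP /(_ x) /forallP /(_ y); rewrite hi hj.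
Qed.

Definition gV : G := [ffun x => [ffun i => odflt x [pick y | holds V (inr i) [:: x; y]]]].

Lemma gV_holds i x : holds V (inr i) [:: x; gV x i].
Proof.
rewrite !ffunE; case: pickP => [y //|H].
by case: (Phi_tot i x) => y; rewrite H.
Qed.

Lemma gV_inj x : injective (gV x).
Proof.
move=> i j e; apply/eqP; apply/negPn/negP => ij.
by apply: (@Phi_dis i j x (gV x i) ij (gV_holds i x)); rewrite e gV_holds.
Qed.

Lemma gV_S x i : gV x i \in Sx (restr V) x.
Proof. by rewrite inE -holds_restr Phi_eq; apply/existsP; exists i; apply: gV_holds. Qed.

Lemma Phi_exact : exactly_k k r (restr V).
Proof.
have ge x : k <= #|Sx (restr V) x|.
  have sub : codom (gV x) \subset Sx (restr V) x by apply/subsetP => _ /codomP [i ->]; apply: gV_S.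
  by rewrite -{1}(card_ord k) -(card_codom (@gV_inj x)) subset_leq_card.
have hs : \sum_(x : D) k = \sum_x #|Sx (restr V) x|.
  by rewrite -natoms_sum -natoms_restr Phi_n sum_nat_const mulnC.
have L := @leqif_sum D predT (fun x => k == #|Sx (restr V) x|) (fun=> k)
   (fun x => #|Sx (restr V) x|) (fun x _ => leqif_eq (ge x)).
move: (L.2); rewrite hs eqxx => /esym/forallP H.
apply/forallP => x; move: (H x) => /=.
by rewrite eq_sym.
Qed.

Lemma gV_unique i x y : holds V (inr i) [:: x; y] -> y = gV x i.
Proof.
move=> hy.
have yS : y \in Sx (restr V) x by rewrite inE -holds_restr Phi_eq; apply/existsP; exists i.
have cS : #|Sx (restr V) x| = k by move: Phi_exact => /forallP /(_ x) /eqP.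
have [j ej] := codom_fill (@gV_inj x) (gV_S x) cS yS.
have [ij|nij] := eqVneq i j; first by rewrite ij.
by case: (@Phi_dis i j x y nij hy); rewrite ej gV_holds.
Qed.

Lemma V_ext : V = ext (restr V) gV.
Proof.
apply/setP => -[[p|i] t]; rewrite !inE /=; first by rewrite inE.
rewrite (mem_holds V i t); apply/idP/eqP => [/gV_unique //|->]; exact: gV_holds.
Qed.

End PhiV.


Definition Gset (w : w0) := [set g : G | [forall x, injectiveb (g x) && [forall i, holds w r [:: x; g x i]]]].

Lemma ext_Phi w g : exactly_k k r w -> g \in Gset w -> Phi r (ext w g).
Proof.
move=> /forallP ek; rewrite inE => /forallP Hg.
have ginj x : injective (g x) by case/andP: (Hg x) => /injectiveP.
have gS x i : g x i \in Sx w x by case/andP: (Hg x) => _ /forallP /(_ i); rewrite inE.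
have cS x : #|Sx w x| = k by apply/eqP; apply: ek.
apply/and4P; split.
- rewrite natoms_restr restr_ext natoms_sum.
  by under eq_bigr => x _ do rewrite cS; rewrite sum_nat_const mulnC.
- apply/forallP => x; apply/forallP => y; rewrite holds_restr restr_ext.
  under eq_existsb do rewrite holds_ext_inr.
  apply/eqP; apply/idP/idP => [h|/existsP [i /eqP ->]]; last by move: (gS x i); rewrite inE.
  have yS : y \in Sx w x by rewrite inE.
  by have [j ->] := codom_fill (ginj x) (gS x) (cS x) yS; apply/existsP; exists j.
- apply/forallP => i; apply/forallP => x; apply/existsP; exists (g x i).
  by rewrite holds_ext_inr.
- apply/forallP => i; apply/forallP => j; apply/implyP => ij.
  apply/forallP => x; apply/forallP => y; rewrite !holds_ext_inr.
  rewrite -negb_and; apply/negP => /andP [/eqP e1 /eqP e2].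
  by move: ij; rewrite (ginj x i j); [rewrite eqxx | rewrite -e1 -e2].
Qed.


Lemma gV_G (V : W) (HV : Phi r V) : gV V \in Gset (restr V).
Proof.
rewrite inE; apply/forallP => x; apply/andP; split.
  by apply/injectiveP; apply: gV_inj.
by apply/forallP => i; move: (gV_S HV x i); rewrite inE.
Qed.

Lemma ext_inj w : injective (ext w).
Proof.
move=> g1 g2 e; apply/ffunP => x; apply/ffunP => i; apply/eqP.
by rewrite eq_sym -(holds_ext_inr w) e holds_ext_inr.
Qed.

Lemma card_Gset w : exactly_k k r w -> #|Gset w| = k`! ^ #|D|.
Proof.
move=> /forallP ek.
pose F (x : D) := [set h : {ffun 'I_k -> D} in ffun_on (Sx w x) | injectiveb h].
have cF x : #|F x| = k`!.
  by rewrite card_inj_ffuns_on card_ord (eqP (ek x)) ffactnn.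
have -> : #|Gset w| = #|(family F : simpl_pred {ffun D -> {ffun 'I_k -> D}})|.
  apply: eq_card => g; rewrite !inE; apply/forallP/familyP => H x; move: (H x).
    case/andP => ij /forallP hx; rewrite inE ij andbT; apply/ffun_onP => i.
    by rewrite inE.
  rewrite inE => /andP [/ffun_onP hx ij]; rewrite ij /=; apply/forallP => i.
  by move: (hx i); rewrite inE.
rewrite card_family.
rewrite /image_mem (eq_map cF) cardE.
elim: (enum D) => //= a s ->.
by rewrite expnS.
Qed.


Lemma card_fiber w :
  #|[set V : W | Phi r V & restr V == w]| = if exactly_k k r w then k`! ^ #|D| else 0.
Proof.
case: ifP => ek.
  have -> : [set V : W | Phi r V & restr V == w] = ext w @: Gset w.
    apply/setP => V; rewrite inE; apply/andP/imsetP => [[HV /eqP <-]|[g gG ->]].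
      by exists (gV V); [apply: gV_G | apply: V_ext].
    by rewrite restr_ext; split => //; apply: ext_Phi.
  by rewrite card_in_imset ?card_Gset // => g1 g2 _ _; apply: ext_inj.
apply/eqP; rewrite cards_eq0; apply/eqP/setP => V; rewrite !inE.
apply/negP => /andP [HV /eqP e].
by move: (Phi_exact HV); rewrite e ek.
Qed.

End S.

Local Open Scope ring_scope.

Lemma weight_restr (D P : finType) (ar : P -> nat) (k : nat) (R : numFieldType) (wt wbar : P -> R)
  (V : world (ext_ar ar (k:=k)) D) :
  world_weight (ext_weight wt) (ext_weight wbar) V = world_weight wt wbar (restr V).
Proof.
rewrite /world_weight big_sumType /=.
rewrite [X in _ * X]big1 ?mulr1 => [|i _]; last by rewrite !expr1n mulr1.
by apply: eq_bigr => p _; rewrite natoms_restr.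
Qed.

Theorem lemma2 (D : finType) (P : finType) (ar : P -> nat) (r : P)
  (ar_r : ar r = 2%N) (k : nat) (k_ge1 : (1 <= k)%N)
  (Gamma : formula P) (Gamma_sentence : sentence Gamma)
  (R : numFieldType) (wt wbar : P -> R) :
  WFOMC (fun w : world ar D => models w Gamma && exactly_k k r w) wt wbar
  = ((k`!)%:R ^+ #|D|)^-1 *
    WFOMC (fun w : world (ext_ar ar (k:=k)) D =>
             models w (map_formula inl Gamma) && Phi r w)
          (ext_weight wt) (ext_weight wbar).
Proof.
rewrite /WFOMC (partition_big (@restr D P ar k) predT) //=.
rewrite big_mkcond mulr_sumr; apply: eq_bigr => w _.
have -> : \sum_(V : world (ext_ar ar (k:=k)) D | (models V (map_formula inl Gamma) && Phi r V) && (restr V == w))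
     world_weight (ext_weight wt) (ext_weight wbar) V =
   \sum_(V in [set V : world (ext_ar ar (k:=k)) D | Phi r V & restr V == w] | models w Gamma) world_weight wt wbar w.
  apply: eq_big => V; last by move=> /andP [_ /eqP <-]; apply: weight_restr.
  rewrite !inE /models eval_restr.
  by case: eqP => [->|_]; rewrite ?andbT ?andbF // andbC.
case: (models w Gamma) => /=; last by rewrite big1 ?mulr0 // => V /andP [].
under eq_bigl do rewrite andbT.
rewrite sumr_const (card_fiber k ar_r).
have c0 : (k`!)%:R ^+ #|D| != 0 :> R by rewrite expf_neq0 // pnatr_eq0 -lt0n fact_gt0.
case: ifP => _; last by rewrite mulr0n mulr0.
by rewrite -(mulr_natr (world_weight wt wbar w)) natrX mulrCA mulVf ?mulr1.
Qed.
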